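(* Let $Y$ be a finite connected simple undirected graph with a cycle-edge $e=\{v,w\}$, and let $O\in\mathsf{Acyc}(Y)$ with $v\leq_O w$. Let $\mathbf{c}=c_1c_2\cdots c_m$ be a click-sequence for $O$ containing precisely one occurrence of $w$ and such that no vertex of $\mathcal{I}(O)$ occurs in $\mathbf{c}$ after that occurrence of $w$. Then there exists a click-sequence $\mathbf{c}'=c'_1c'_2\cdots c'_m$ for $O$ such that (i) there is an interval $[p,q]$ of integers with $c'_j\in\mathcal{I}(O)$ if and only if $p\leq j\leq q$, and (ii) $\mathbf{c}(O)=\mathbf{c}'(O)$.
   Context: $\mathsf{Acyc}(Y)$ is the set of acyclic orientations; $i\leq_O j$ iff there is a directed path from $i$ to $j$ in $O$. $\mathcal{I}(O)=\{a: v\leq_O a\leq_O w\}$ when $v\leq_O w$. A click at a vertex $x$ which is a source reverses all edges incident to $x$. A click-sequence for $O$ is a sequence of vertices $c_1,\dots,c_m$ such that for each $i$, $c_i$ is a source of the orientation obtained from $O$ by successively clicking $c_1,\dots,c_{i-1}$; $\mathbf{c}(O)$ denotes the resulting orientation after all $m$ clicks. *)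

(* Defs.v *)
From mathcomp Require Import all_boot.
Set Implicit Arguments. Unset Strict Implicit. Unset Printing Implicit Defensive.

Definition simple_graph (T : finType) (Y : rel T) : Prop :=
  symmetric Y /\ irreflexive Y.

Definition connected_graph (T : finType) (Y : rel T) : Prop :=
  forall x y : T, connect Y x y.

Definition cycle_edge (T : finType) (Y : rel T) (v w : T) : Prop :=
  Y v w /\
  exists p : seq T,
    [/\ 0 < size p, uniq (v :: w :: p), path Y w p & Y (last w p) v].

(* An orientation of Y: a relation o with o x y meaning the edge {x,y} is
   oriented x -> y; every edge gets exactly one direction, non-edges none. *)
Definition orientation (T : finType) (Y : rel T) (o : rel T) : Prop :=
  (forall x y, o x y -> Y x y) /\
  (forall x y, Y x y -> o x y (+) o y x).

Definition acyclic (T : finType) (o : rel T) : Prop :=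
  forall x y, o x y -> ~~ connect o y x.

Definition is_acyc (T : finType) (Y : rel T) (o : rel T) : Prop :=
  orientation Y o /\ acyclic o.

Definition leO (T : finType) (o : rel T) (i j : T) : bool := connect o i j.

Definition interval (T : finType) (o : rel T) (v w : T) : pred T :=
  fun a => leO o v a && leO o a w.

Definition is_source (T : finType) (o : rel T) (x : T) : bool :=
  [forall y, ~~ o y x].

Definition click (T : finType) (o : rel T) (x : T) : rel T :=
  fun a b => if (a == x) || (b == x) then o b a else o a b.

Fixpoint click_seq_valid (T : finType) (o : rel T) (c : seq T) : bool :=
  if c is x :: c' then is_source o x && click_seq_valid (click o x) c'
  else true.

Definition click_result (T : finType) (o : rel T) (c : seq T) : rel T :=
  foldl (@click T) o c.

(* Main.v *)
Require Import Defs.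
From mathcomp Require Import all_boot zify.
Set Implicit Arguments. Unset Strict Implicit. Unset Printing Implicit Defensive.

Definition on (T : finType) (o : rel T) (n : T -> nat) : rel T :=
  fun a b => if odd (n a + n b) then o b a else o a b.
Definition cnt (T : finType) (n : T -> nat) (s : seq T) : T -> nat :=
  fun u => n u + count_mem u s.
Definition adm (T : finType) (o : rel T) (n : T -> nat) : Prop :=
  forall x y, o x y -> n y <= n x <= (n y).+1.

Lemma cnt_cat (T : finType) n (s1 s2 : seq T) : cnt n (s1 ++ s2) =1 cnt (cnt n s1) s2.
Proof. by move=> u; rewrite /cnt count_cat addnA. Qed.

Lemma cnt_nil (T : finType) n : cnt n ([::] : seq T) =1 n.
Proof. by move=> u; rewrite /cnt addn0. Qed.

Lemma adm_ext (T : finType) (o : rel T) n1 n2 : n1 =1 n2 -> adm o n1 -> adm o n2.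
Proof. by move=> E H x y /H; rewrite !E. Qed.

Lemma valid_ext (T : finType) (o1 o2 : rel T) s :
  o1 =2 o2 -> click_seq_valid o1 s = click_seq_valid o2 s.
Proof.
elim: s o1 o2 => [|x s IH] o1 o2 E //=.
rewrite (IH _ (click o2 x)); last by move=> a b; rewrite /click !E.
congr (_ && _); rewrite /is_source; apply: eq_forallb => y; by rewrite E.
Qed.

Lemma click_ext (T : finType) (o1 o2 : rel T) x : o1 =2 o2 -> click o1 x =2 click o2 x.
Proof. by move=> E a b; rewrite /click !E. Qed.

Lemma on_ext (T : finType) (o : rel T) n1 n2 : n1 =1 n2 -> on o n1 =2 on o n2.
Proof. by move=> E a b; rewrite /on !E. Qed.

Lemma click_on (T : finType) (o : rel T) n x : click (on o n) x =2 on o (cnt n [:: x]).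
Proof.
move=> a b; rewrite /click /on /cnt /=.
case: (eqVneq a x) => [->|ax]; case: (eqVneq b x) => [->|bx] /=;
  rewrite ?eqxx ?(eq_sym x a) ?(eq_sym x b) ?(negbTE ax) ?(negbTE bx) /=.
all: rewrite ?addn0.
- by case: (odd _); case: (odd _).
- have -> : odd (n x + 1 + n b) = ~~ odd (n b + n x) by lia.
  by case: (odd _).
- have -> : odd (n a + (n x + 1)) = ~~ odd (n x + n a) by lia.
  by case: (odd _).
- done.
Qed.

Lemma step1 (T : finType) (o : rel T) n x :
  (forall a b, o a b -> ~~ o b a) -> adm o n ->
  is_source (on o n) x -> adm o (cnt n [:: x]).
Proof.
move=> asym an /forallP src a b oab; have := an a b oab; rewrite /cnt /=.
have nba := asym _ _ oab.
case: (eqVneq x a) => [xa|xa]; case: (eqVneq x b) => [xb|xb] /=.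
- by subst; rewrite oab in nba.
- subst; have := src b; rewrite /on oab (negbTE nba); case: ifP => // h _; lia.
- subst; have := src a; rewrite /on oab (negbTE nba); case: ifP => // h _; lia.
- lia.
Qed.

Lemma step2 (T : finType) (o : rel T) n x :
  (forall a b, o a b -> ~~ o b a) -> adm o n ->
  adm o (cnt n [:: x]) -> is_source (on o n) x.
Proof.
move=> asym an an1; apply/forallP => y; rewrite /on.
case: (eqVneq y x) => [->|yx].
  have -> : odd (n x + n x) = false by lia.
  by apply/negP => h; have := asym _ _ h; rewrite h.
case: (boolP (o x y)) => oxy.
  have := an x y oxy; have := an1 x y oxy; rewrite /cnt /= eqxx (eq_sym x y) (negbTE yx) /= => h1 h2.
  have -> : odd (n y + n x) = false by lia.
  exact: asym.
case: (boolP (o y x)) => oyx.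
  have := an y x oyx; have := an1 y x oyx; rewrite /cnt /= eqxx (eq_sym x y) (negbTE yx) /= => h1 h2.
  have -> : odd (n y + n x) = true by lia.
  done.
by case: ifP.
Qed.

Lemma valid_on (T : finType) (o : rel T) (asym : forall a b, o a b -> ~~ o b a) s n :
  adm o n ->
  (click_seq_valid (on o n) s <-> forall t, t <= size s -> adm o (cnt n (take t s))).
Proof.
elim: s n => [|x s IH] n an /=.
  by split=> // _ t _; apply: adm_ext an => u; rewrite /cnt addn0.
rewrite (valid_ext _ (click_on o n x)); split.
  case/andP => src v [_|t] /=.
    by apply: adm_ext an => u; rewrite /cnt addn0.
  move=> lt; have a1 := step1 asym an src.
  have := (IH _ a1).1 v t lt; apply: adm_ext => u.
  by rewrite -cnt_cat.
move=> H.
have a1 : adm o (cnt n [:: x]).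
  by have := H 1 isT; apply: adm_ext => u; rewrite /= take0.
rewrite (step2 asym an a1) /=; apply/(IH _ a1) => t lt.
by have := H t.+1 lt; apply: adm_ext => u; rewrite -cnt_cat.
Qed.

Lemma adm_max (T : finType) (o : rel T) n m :
  adm o n -> adm o m -> adm o (fun u => maxn (n u) (m u)).
Proof. by move=> hn hm x y oxy; have := hn x y oxy; have := hm x y oxy; lia. Qed.

Lemma adm_connect (T : finType) (o : rel T) n x y : adm o n -> connect o x y -> n y <= n x.
Proof.
move=> an /connectP [p pth ->].
elim: p x pth => [|z p IH] x //= /andP [oxz pz].
have := IH _ pz; have := an _ _ oxz; lia.
Qed.

Fixpoint rmf (T : finType) (W : pred T) (n : T -> nat) (s : seq T) : seq T :=
  if s is x :: s' then
    if W x && (n x == 0) then rmf W (cnt n [:: x]) s' else x :: rmf W (cnt n [:: x]) s'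
  else [::].

Lemma rmf_count (T : finType) (W : pred T) n s u :
  count_mem u (rmf W n s) + [&& W u, n u == 0 & u \in s] = count_mem u s.
Proof.
elim: s n => [|x s IH] n /=; first by rewrite !andbF.
rewrite in_cons; have := IH (cnt n [:: x]); rewrite /cnt /=.
case: (eqVneq x u) => [<-|xu]; rewrite /= ?eqxx ?(eq_sym u x) ?(negbTE xu) /=;
  case hW : (W x); case hn : (n x == 0) => /=; rewrite ?eqxx ?(negbTE xu) /=; try lia.
Qed.

Lemma rmf_prefix (T : finType) (W : pred T) n s t' :
  t' <= size (rmf W n s) ->
  exists2 t, t <= size s &
    cnt (fun u => maxn (n u) (W u)) (take t' (rmf W n s)) =1
      (fun u => maxn (cnt n (take t s) u) (W u)).
Proof.
elim: s n t' => [|x s IH] n t' /=.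
  move=> _; exists 0 => // u; rewrite /cnt /=; lia.
case: ifP => h.
  move=> /(IH (cnt n [:: x])) [t ts E]; exists t.+1 => // u.
  have := E u; rewrite /cnt /=; move: h => /andP [Wx /eqP nx].
  case: (eqVneq x u) => [<-|xu] /=; rewrite ?Wx; lia.
case: t' => [|t'] /=.
  by move=> _; exists 0 => // u; rewrite /cnt /=; lia.
move=> /(IH (cnt n [:: x])) [t ts E]; exists t.+1 => // u.
have := E u; rewrite /cnt /=.
case: (eqVneq x u) => [<-|xu] /=; last lia.
move: h; case: (W x) => /=; last lia.
move=> /negbT; lia.
Qed.

Lemma res_on (T : finType) (o : rel T) s : forall n (o' : rel T),
  o' =2 on o n -> foldl (@click T) o' s =2 on o (cnt n s).
Proof.
elim: s => [|x s IH] n o' E /=.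
  by move=> a b; rewrite E; apply: on_ext => u; rewrite /cnt addn0.
move=> a b; rewrite (IH (cnt n [:: x])); last first.
  by move=> c d; rewrite (click_ext x E) click_on.
by apply: on_ext => u; rewrite -cnt_cat.
Qed.

Lemma cnt_sfe (T : finType) (r : rel T) (P : pred T) u :
  count_mem u (sort r [seq x <- enum T | P x]) = P u.
Proof.
have p : perm_eq (sort r [seq x <- enum T | P x]) [seq x <- enum T | P x].
  by rewrite perm_sort perm_refl.
rewrite (permP p) count_uniq_mem; last by rewrite filter_uniq // enum_uniq.
by rewrite mem_filter mem_enum andbT.
Qed.

Lemma sorted_take (T : finType) (c : seq T) (s : seq T) t x y :
  sorted (fun a b => index a c <= index b c) s -> x \in s -> y \in s ->
  index x c < index y c -> y \in take t s -> x \in take t s.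
Proof.
move=> srt xs ys lt; rewrite !in_take //.
case: (ltnP (index x s) (index y s)) => [h1 h2|h]; first lia.
have tr : transitive (fun a b : T => index a c <= index b c).
  by move=> b a d; apply: leq_trans.
have rf : reflexive (fun a b : T => index a c <= index b c) by move=> a.
have := @sorted_leq_nth _ _ tr rf x s srt (index y s) (index x s).
rewrite !inE !index_mem !nth_index // => /(_ ys xs h) H; lia.
Qed.

Theorem proposition8 (T : finType) (Y : rel T) (v w : T) (o : rel T)
  (c : seq T) :
  simple_graph Y -> connected_graph Y -> cycle_edge Y v w ->
  is_acyc Y o -> leO o v w ->
  click_seq_valid o c ->
  count_mem w c = 1 ->
  (forall j, index w c < j < size c -> nth v c j \notin interval o v w) ->
  exists c' : seq T,
    [/\ size c' = size c,
        click_seq_valid o c',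
        (exists p q : nat, forall j, j < size c' ->
            (nth v c' j \in interval o v w) = (p <= j <= q))
      & click_result o c =2 click_result o c'].
Proof.
move=> _ _ [Yvw _] [[orY orX] acy] lvw val cw hafter.
have asym : forall a b, o a b -> ~~ o b a.
  by move=> a b oab; have := orX a b (orY a b oab); rewrite oab.
have ovw : o v w.
  have := orX v w Yvw; case: (o v w) => //= owv.
  by have := acy _ _ owv; rewrite /leO in lvw; rewrite lvw.
have on0 : on o (fun _ => 0) =2 o by [].
have adm0 : adm o (fun _ => 0) by move=> x y _.
have valc : forall t, t <= size c -> adm o (cnt (fun _ => 0) (take t c)).
  by apply/(valid_on asym c adm0); rewrite (valid_ext c on0).
pose I := interval o v w.
have inI : forall a, (a \in interval o v w) = I a by [].
have Ibnd : forall t a, t <= size c -> I a ->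
    let n := cnt (fun _ => 0) (take t c) in n w <= n a <= (n w).+1.
  move=> t a ts /andP [va aw] /=.
  have an := valc t ts.
  have h1 := adm_connect an aw; have h2 := adm_connect an va.
  have h3 := an _ _ ovw; lia.
have wc : w \in c.
  by case: (boolP (w \in c)) => // /count_memPn; rewrite cw.
have [k kE] : exists k, k = index w c by eexists.
have kc : k < size c by rewrite kE index_mem.
rewrite -kE in hafter.
have Iinc : forall a, I a -> a \in c.
  move=> a Ia; have := Ibnd _ a (leqnn _) Ia; rewrite take_size /cnt /= cw.
  by case: (boolP (a \in c)) => // /count_memPn ->.
have Icnt : forall a, I a -> count_mem a c <= 1.
  move=> a Ia; case: (eqVneq a w) => [->|aw]; first by rewrite cw.
  have := Ibnd k a (ltnW kc) Ia; rewrite /cnt /=.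
  have -> : count_mem w (take k c) = 0.
    apply/count_memPn; by apply/negP => /index_ltn; rewrite -kE ltnn.
  move=> H.
  rewrite -(cat_take_drop k c) count_cat (drop_nth v kc) /= (_ : nth v c k = w); last by rewrite kE nth_index.
  rewrite (eq_sym w a) (negbTE aw) /=.
  have -> : count_mem a (drop k.+1 c) = 0.
    apply/count_memPn; apply/negP => ad.
    have hi : index a (drop k.+1 c) < size (drop k.+1 c) by rewrite index_mem.
    have e : nth v c (k.+1 + index a (drop k.+1 c)) = a by rewrite -nth_drop nth_index.
    have h : k < k.+1 + index a (drop k.+1 c) < size c.
      by rewrite size_drop in hi; apply/andP; split; lia.
    by have := hafter _ h; rewrite e inI Ia.
  lia.
have ordc : forall x y, o x y -> y \in c -> (x \in c) && (index x c < index y c).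
  move=> x y oxy yc.
  have ts : (index y c).+1 <= size c by rewrite index_mem.
  have := (valc _ ts) x y oxy; rewrite /cnt /= !add0n => hc.
  have yt : y \in take (index y c).+1 c by rewrite in_take // ltnSn.
  have cy : 0 < count_mem y (take (index y c).+1 c) by rewrite -has_count has_pred1.
  have xt : x \in take (index y c).+1 c.
    by rewrite -has_pred1 has_count; apply: leq_trans cy _; case/andP: hc.
  have xc := mem_take xt; rewrite xc /=.
  have := index_ltn xt; rewrite ltnS leq_eqVlt => /orP [/eqP E|//].
  have := nth_index v xc; rewrite E nth_index // => exy; subst.
  by have := asym _ _ oxy; rewrite oxy.
pose W' : pred T := fun u => (u \in c) && leO o u w.
pose le := fun a b : T => index a c <= index b c.
have tot : total le by move=> a b; apply: leq_total.
pose B1 := sort le [seq u <- enum T | W' u && ~~ I u].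
pose B2 := sort le [seq u <- enum T | W' u && I u].
have mB1 : forall u, (u \in B1) = W' u && ~~ I u.
  by move=> u; rewrite mem_sort mem_filter mem_enum andbT.
have mB2 : forall u, (u \in B2) = W' u && I u.
  by move=> u; rewrite mem_sort mem_filter mem_enum andbT.
pose blk := B1 ++ B2.
have cntblk : forall u, count_mem u blk = W' u.
  by move=> u; rewrite count_cat !cnt_sfe; case: (W' u); case: (I u).
have ublk : uniq blk.
  apply: count_mem_uniq => u; rewrite cntblk mem_cat mB1 mB2.
  by case: (W' u); case: (I u).
have dc : forall t x y, o x y -> y \in take t blk -> x \in take t blk.
  move=> t x y oxy yt.
  have yb := mem_take yt.
  have : W' y by have := cntblk y; rewrite count_uniq_mem // yb; case: (W' y).
  case/andP => yc yw.
  case/andP: (ordc _ _ oxy yc) => xc lt.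
  have xw : leO o x w := connect_trans (connect1 oxy) yw.
  have IxIy : I x -> I y.
    by move=> /andP [vx _]; apply/andP; split=> //; exact: connect_trans vx (connect1 oxy).
  have Wx : W' x by apply/andP.
  case: (ltnP t (size B1)) => tb.
    move: yt; rewrite /blk !take_cat tb => yt.
    have : y \in B1 := mem_take yt.
    rewrite mB1 => /andP [_ nIy].
    have xB1 : x \in B1 by rewrite mB1 Wx /=; apply/negP => /IxIy; apply/negP.
    exact: (sorted_take (sort_sorted tot _) xB1 (mem_take yt) lt yt).
  move: yt; rewrite /blk !take_cat ltnNge tb /= !mem_cat => /orP [yB1|yt].
    have xB1 : x \in B1.
      by rewrite mB1 Wx /=; apply/negP => /IxIy; move: yB1; rewrite mB1 => /andP [_ /negP].
    by rewrite xB1.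
  case: (boolP (I x)) => Ix.
    have xB2 : x \in B2 by rewrite mB2 Wx Ix.
    by rewrite (sorted_take (sort_sorted tot _) xB2 (mem_take yt) lt yt) orbT.
  by rewrite mB1 Wx Ix.
have admblk : forall t, adm o (cnt (fun _ => 0) (take t blk)).
  move=> t x y oxy; rewrite /cnt !add0n !count_uniq_mem ?take_uniq //.
  move: (dc t x y oxy); case: (y \in take t blk); case: (x \in take t blk) => //.
  by move=> /(_ isT).
have admW : adm o (fun u => nat_of_bool (W' u)).
  by apply: adm_ext (admblk (size blk)) => u; rewrite take_size /cnt cntblk.
pose rest := rmf W' (fun _ => 0) c.
have rcnt : forall u, count_mem u rest + W' u = count_mem u c.
  move=> u; have := rmf_count W' (fun _ => 0) c u.
  have -> : [&& W' u, 0 == 0 & u \in c] = W' u.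
    by rewrite /W' /=; apply/idP/idP => [/andP [] // | /andP [h1 h2]]; rewrite h1 h2.
  done.
have restI : forall a, a \in rest -> ~~ I a.
  move=> a ar; apply/negP => Ia.
  have Wa : W' a by apply/andP; split; [exact: Iinc | case/andP: Ia].
  have := rcnt a; have := Icnt a Ia; rewrite Wa.
  have : count_mem a rest != 0 by apply/negP => /eqP/count_memPn; rewrite ar.
  lia.
pose c' := blk ++ rest.
have pc : perm_eq c' c.
  rewrite /perm_eq; apply/allP => u _; apply/eqP.
  by rewrite count_cat cntblk -(rcnt u) addnC.
have wB2 : w \in B2.
  rewrite mB2; apply/andP; split; apply/andP; split=> //; apply: connect0.
have sB2 : 0 < size B2 by case: (B2) wB2.
exists c'; split.
- exact: perm_size pc.
- rewrite -(valid_ext c' on0); apply/(valid_on asym c' adm0) => t tc.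
  case: (leqP t (size blk)) => tb.
    by rewrite /c' takel_cat //; exact: admblk.
  have -> : take t c' = blk ++ take (t - size blk) rest.
    by rewrite /c' take_cat ltnNge (ltnW tb).
  have tr : t - size blk <= size rest by rewrite /c' size_cat in tc; lia.
  case: (rmf_prefix tr) => t0 t0c E.
  apply: adm_ext (adm_max (valc _ t0c) admW) => u.
  rewrite cnt_cat -E /cnt cntblk.
  by rewrite max0n.
- exists (size B1), (size B1 + size B2).-1 => j jc.
  rewrite inI /c' nth_cat.
  case: (ltnP j (size blk)) => jb.
    rewrite /blk nth_cat; case: (ltnP j (size B1)) => j1.
      have : nth v B1 j \in B1 := mem_nth v j1.
      rewrite mB1 => /andP [_ /negbTE ->]; lia.
    have : nth v B2 (j - size B1) \in B2.
      apply: mem_nth; move: jb j1; rewrite /blk size_cat; move: (size B1) (size B2) => p1 p2; lia.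
    rewrite mB2 => /andP [_ ->]; rewrite /blk size_cat in jb; lia.
  have : nth v rest (j - size blk) \in rest.
    by apply: mem_nth; move: jc jb; rewrite /c' size_cat; move: (size blk) (size rest) => p1 p2; lia.
  move/restI/negbTE ->; rewrite /blk size_cat in jb; lia.
- move=> a b; rewrite /click_result.
  have e0 : o =2 on o (fun _ => 0) by move=> x y; rewrite on0.
  rewrite (res_on c e0) (res_on c' e0); apply: on_ext => u.
  by rewrite /cnt (permP pc).
Qed.
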